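(* Let $\mathcal G=\langle V=V_{\mathrm{Min}}\uplus V_{\mathrm{Max}}, V_T, A, E, \omega\rangle$ be a finite weighted game and $c\colon V_T\to\mathbb Z$. Assume that the subgraph induced by $V\setminus V_T$ is strongly connected, that every cycle all of whose vertices lie in $V\setminus V_T$ has negative weight, and that no vertex has value $+\infty$ or $-\infty$ (with respect to $c$). Let $n=|V\setminus V_T|$. Define $\vec x^0$ by $\vec x^0_v=c(v)$ for $v\in V_T$ and $\vec x^0_v=-\infty$ for $v\in V\setminus V_T$, and $\vec x^i=F(\vec x^{i-1})$ for $i>0$. Then $\vec x^{n+k}=\vec x^n$ for all $k\ge 0$.
   Context: A weighted game has vertices $V$ partitioned into vertices of Min and of Max, targets $V_T\subseteq V_{\mathrm{Min}}$, alphabet $A$, edges $E\subseteq V\times A\times V$, weights $\omega\colon E\to\mathbb Z$, and is deadlock-free and deterministic. A cycle is a finite sequence of consecutive edges starting and ending at the same vertex (length $\ge1$); its weight is the sum of its edge weights. With target values $c$, the weight of a play is $+\infty$ if it never visits $V_T$, and otherwise the sum of its edge weights up to the first visit of some $t\in V_T$ plus $c(t)$; the value of $v$ is $\inf_{\sigma_{\mathrm{Min}}}\sup_{\sigma_{\mathrm{Max}}}$ (equal to $\sup_{\sigma_{\mathrm{Max}}}\inf_{\sigma_{\mathrm{Min}}}$) of the weight of the outcome from $v$, strategies choosing an outgoing edge after each finite play ending in a vertex of the player. The operator $F$ on $(\mathbb Z\cup\{-\infty,+\infty\})^V$ is $F(\vec x)_v=c(v)$ if $v\in V_T$, $F(\vec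 x)_v=\min_{e=(v,a,v')\in E}\omega(e)+\vec x_{v'}$ if $v\in V_{\mathrm{Min}}\setminus V_T$, and $F(\vec x)_v=\max_{e=(v,a,v')\in E}\omega(e)+\vec x_{v'}$ if $v\in V_{\mathrm{Max}}$. *)

(* Defs.v *)
From HB Require Import structures.
From mathcomp Require Import all_boot all_order all_algebra.
From mathcomp Require Import boolp classical_sets reals constructive_ereal ereal Rstruct.
Set Implicit Arguments. Unset Strict Implicit. Unset Printing Implicit Defensive.
Import Order.TTheory GRing.Theory Num.Theory.
Local Open Scope ring_scope.
Local Open Scope classical_set_scope.
Local Open Scope ereal_scope.

Notation RR := Rdefinitions.R.

Section Game.
(* A weighted game: vertices V (finite), Min's vertices isMin (Max owns the
   rest), targets VT, alphabet A (finite), edges E, weights w. *)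
Variables (V A : finType) (isMin : pred V) (VT : pred V)
          (E : {set V * A * V}) (w : V * A * V -> int) (c : V -> int).

Definition src (e : V * A * V) : V := e.1.1.
Definition tgt (e : V * A * V) : V := e.2.

Definition deadlock_free : Prop := forall v, exists2 e, e \in E & src e = v.
Definition deterministic : Prop :=
  forall v a v1 v2, (v, a, v1) \in E -> (v, a, v2) \in E -> v1 = v2.

Definition last_vertex (v0 : V) (h : seq (V * A * V)) : V := last v0 (map tgt h).

(* A strategy maps a finite play (start vertex, edges) to the next edge; it is
   a strategy for the player owning the vertices in [own] if, whenever the
   play ends in a vertex of that player, it picks an outgoing edge there. *)
Definition strategy := V -> seq (V * A * V) -> V * A * V.
Definition is_strategy (own : pred V) (s : strategy) : Prop :=
  forall v0 h, own (last_vertex v0 h) ->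
    s v0 h \in E /\ src (s v0 h) = last_vertex v0 h.

Fixpoint outcome_prefix (v0 : V) (sMin sMax : strategy) (k : nat)
  : seq (V * A * V) :=
  match k with
  | 0 => [::]
  | k'.+1 => let h := outcome_prefix v0 sMin sMax k' in
             rcons h (if isMin (last_vertex v0 h) then sMin v0 h else sMax v0 h)
  end.

Definition outcome_vertex v0 sMin sMax k :=
  last_vertex v0 (outcome_prefix v0 sMin sMax k).

Definition outcome_weight (v0 : V) (sMin sMax : strategy) : \bar RR :=
  match pselect (exists i, VT (outcome_vertex v0 sMin sMax i)) with
  | left H => let i := ex_minn H in
      (((\sum_(e <- outcome_prefix v0 sMin sMax i) w e
          + c (outcome_vertex v0 sMin sMax i))%R)%:~R)%:E
  | right _ => +oo
  end.

Definition game_value (v : V) : \bar RR :=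
  ereal_inf [set ereal_sup [set outcome_weight v sMin sMax
                             | sMax in [set s | is_strategy (predC isMin) s]]
            | sMin in [set s | is_strategy isMin s]].

Definition Fop (x : V -> \bar RR) (v : V) : \bar RR :=
  if VT v then ((c v)%:~R)%:E
  else if isMin v then
    \big[Order.min/+oo]_(e in E | src e == v) (((w e)%:~R)%:E + x (tgt e))
  else
    \big[Order.max/-oo]_(e in E | src e == v) (((w e)%:~R)%:E + x (tgt e)).

Definition x0 (v : V) : \bar RR := if VT v then ((c v)%:~R)%:E else -oo.

Definition inner_rel : rel V :=
  fun u v => [&& ~~ VT u, ~~ VT v & [exists a, (u, a, v) \in E]].

Definition inner_strongly_connected : Prop :=
  forall u v, ~~ VT u -> ~~ VT v -> connect inner_rel u v.

Definition inner_cycle (p : seq (V * A * V)) : Prop :=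
  match p with
  | [::] => False
  | e0 :: _ =>
      [/\ all (fun e => e \in E) p,
          all (fun e => ~~ VT (src e) && ~~ VT (tgt e)) p,
          path (fun e f => tgt e == src f) e0 (behead p)
        & tgt (last e0 p) = src e0]
  end.

Definition cycle_weight (p : seq (V * A * V)) : int := (\sum_(e <- p) w e)%R.

End Game.

(* Main.v *)
Require Import Defs.
From HB Require Import structures.
From mathcomp Require Import all_boot all_order all_algebra.
From mathcomp Require Import boolp classical_sets reals constructive_ereal ereal Rstruct.
From mathcomp Require Import lra.
Import Order.TTheory GRing.Theory Num.Theory.
Local Open Scope ring_scope.

Lemma path_iota_gen (r : nat -> nat -> bool) a k :
  (forall i, (a <= i < a + k)%N -> r i i.+1) -> path r a (iota a.+1 k).
Proof.
elim: k a => [|k IH] a H //=.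
rewrite H ?addn1 ?leqnn ?addnS ?ltnS ?leq_addr //=.
apply: IH => i /andP[h1 h2]; apply: H; rewrite ltnW //= -addSnnS //.
Qed.

Lemma last_iota_gen a k : last a (iota a.+1 k) = (a + k)%N.
Proof.
elim: k a => [|k IH] a /=; first by rewrite addn0.
by rewrite IH addSnnS.
Qed.

Section S.
Local Open Scope ereal_scope.
Lemma Fmono (V A : finType) (isMin : pred V) (VT : pred V)
  (E : {set V * A * V}) (w : V * A * V -> int) (c : V -> int) (x y : V -> \bar RR) :
  (forall v, x v <= y v) -> forall v, Fop isMin VT E w c x v <= Fop isMin VT E w c y v.
Proof.
move=> H v; rewrite /Fop; case: (VT v) => //.
case: (isMin v).
  by apply: le_bigmin2 => e _; apply: leeD2l.
by apply: le_bigmax2 => e _; apply: leeD2l.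
Qed.
End S.

Theorem proposition4 (V A : finType) (isMin : pred V) (VT : pred V)
  (E : {set V * A * V}) (w : V * A * V -> int) (c : V -> int) :
  (forall v, VT v -> isMin v) ->
  deadlock_free E ->
  deterministic E ->
  inner_strongly_connected VT E ->
  (forall p, inner_cycle VT E p -> (cycle_weight w p < 0)%R) ->
  (forall v, game_value isMin VT E w c v != +oo%E /\
             game_value isMin VT E w c v != -oo%E) ->
  let n := #|[pred v | ~~ VT v]| in
  forall k v,
    iter (n + k) (Fop isMin VT E w c) (x0 VT c) v
    = iter n (Fop isMin VT E w c) (x0 VT c) v.
Proof.
move=> _ Hdf _ _ Hneg _ n.
Local Open Scope ereal_scope.
set F := Fop isMin VT E w c.
pose X m := iter m F (x0 VT c).
have XS m : X m.+1 = F (X m) by [].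
have Xtgt m v : VT v -> X m v = ((c v)%:~R)%:E.
  by case: m => [|m] H; rewrite ?XS /= /F /Fop /x0 H.
have Xinc m v : X m v <= X m.+1 v.
  elim: m v => [|m IH] v.
    rewrite /= /x0; case: (boolP (VT v)) => H; last exact: leNye.
    by rewrite /F /Fop H.
  by rewrite XS [X m.+2]XS; apply: Fmono.
have Xmono m m' v : (m <= m')%N -> X m v <= X m' v.
  move=> /subnKC <-; elim: (m' - m)%N => [|d IH]; first by rewrite addn0.
  by rewrite addnS (le_trans IH).
have Xfin m v : X m v < +oo.
  elim: m v => [|m IH] v.
    by rewrite /= /x0; case: (VT v) => //; rewrite ltey.
  rewrite XS /F /Fop; case: (VT v); first by rewrite ltey.
  case: (isMin v).
    have [e He Hs] := Hdf v.
    have Pe : (e \in E) && (src e == v) by rewrite He /= Hs.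
    have HH := @bigmin_le_cond _ _ _ +oo e (fun e => (e \in E) && (src e == v)) (fun e => ((w e)%:~R)%:E + X m (tgt e)) Pe.
    apply: (le_lt_trans HH).
    by apply: lte_add_pinfty; [exact: ltry | exact: IH].
  apply: (big_ind (fun x : \bar RR => x < +oo)).
  - by [].
  - by move=> x y hx hy; rewrite gt_max hx hy.
  - by move=> e _; apply: lte_add_pinfty; [exact: ltry | exact: IH].
have step m v : X m.+1 v < X m.+2 v -> ~~ VT v /\ exists e,
    [&& e \in E, src e == v, X m (tgt e) < X m.+1 (tgt e) &
        X m.+2 v <= ((w e)%:~R)%:E + X m.+1 (tgt e)].
  move=> H.
  have nT : ~~ VT v by apply/negP => hv; move: H; rewrite !Xtgt // ltxx.
  split=> //.
  set P := fun e => [&& e \in E, src e == v, X m (tgt e) < X m.+1 (tgt e) &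
        X m.+2 v <= ((w e)%:~R)%:E + X m.+1 (tgt e)].
  case: (pickP P) => [e He|none]; first by exists e.
  exfalso.
  case hM: (isMin v).
    have Hle e : (e \in E) && (src e == v) ->
        X m.+2 v <= ((w e)%:~R)%:E + X m.+1 (tgt e).
      move=> Pe; rewrite XS /F /Fop (negbTE nT) hM.
      exact: (@bigmin_le_cond _ _ _ +oo e (fun e => (e \in E) && (src e == v))
               (fun e => ((w e)%:~R)%:E + X m.+1 (tgt e)) Pe).
    suff: X m.+2 v <= X m.+1 v by rewrite leNgt H.
    rewrite [X m.+2]XS [X m.+1]XS /F /Fop (negbTE nT) hM.
    apply: le_bigmin2 => e Pe.
    have := none e; case/andP: (Pe) => eE es; rewrite /P eE es /= Hle // andbT => /negbT; rewrite -leNgt => h.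
    exact: leeD2l.
  have : X m.+2 v < X m.+2 v.
    rewrite {1}[X m.+2]XS /F /Fop (negbTE nT) hM.
    apply: (big_ind (fun x : \bar RR => x < X m.+2 v)).
    - exact: le_lt_trans (leNye _) H.
    - by move=> x y hx hy; rewrite gt_max hx hy.
    - move=> e Pe; have := none e; case/andP: (Pe) => eE es; rewrite /P eE es /=.
      case: (ltP (X m (tgt e)) (X m.+1 (tgt e))) => h /=.
        by move/negbT; rewrite -ltNge.
      move=> _; apply: le_lt_trans H.
      apply: le_trans (leeD2l _ h) _.
      rewrite [X m.+1]XS /F /Fop (negbTE nT) hM.
      exact: (@le_bigmax_cond _ _ _ -oo e (fun e => (e \in E) && (src e == v))
               (fun e => ((w e)%:~R)%:E + X m (tgt e)) Pe).
  by rewrite ltxx.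
have intS m x : X m x < X m.+1 x -> ~~ VT x.
  by move=> H; apply/negP => hx; move: H; rewrite !Xtgt // ltxx.
have main v0 : X n.+1 v0 <= X n v0.
  rewrite leNgt; apply/negP => H0.
  pose Q j x e := [&& e \in E, src e == x, X (n - j.+1)%N (tgt e) < X (n - j.+1)%N.+1 (tgt e) &
        X (n - j.+1)%N.+2 x <= ((w e)%:~R)%:E + X (n - j.+1)%N.+1 (tgt e)].
  pose pk j x := [pick e | Q j x e].
  pose u := fix u j := if j is j'.+1 then
              (if pk j' (u j') is Some e then tgt e else u j') else v0.
  have uS j : u j.+1 = (if pk j (u j) is Some e then tgt e else u j) by [].
  have inv j : (j <= n)%N -> X (n - j)%N (u j) < X (n - j)%N.+1 (u j).
    elim: j => [|j IH] hj; first by rewrite subn0.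
    have := IH (ltnW hj); rewrite -(subnSK hj) => /step [_ [e He]].
    rewrite uS /pk; case: (pickP (Q j (u j))) => [e' He'|none]; last by move: (none e); rewrite /Q He.
    by move: He'; rewrite /Q => /and4P [_ _ ? _].
  have pkP j : (j < n)%N -> exists e, pk j (u j) = Some e /\ Q j (u j) e.
    move=> hj; have := inv j (ltnW hj); rewrite -(subnSK hj) => /step [_ [e He]].
    rewrite /pk; case: (pickP (Q j (u j))) => [e' He'|none]; first by exists e'.
    by move: (none e); rewrite /Q He.
  have [e00 _ _] := Hdf v0.
  pose f j := odflt e00 (pk j (u j)).
  have fP j : (j < n)%N -> [/\ f j \in E, src (f j) = u j, tgt (f j) = u j.+1 &
        X (n - j)%N.+1 (u j) <= ((w (f j))%:~R)%:E + X (n - j)%N (u j.+1)].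
    move=> hj; have [e [He HQ]] := pkP j hj.
    rewrite /f uS He /=; move: HQ; rewrite /Q => /and4P [-> /eqP -> _].
    by rewrite (subnSK hj).
  have uint j : (j <= n)%N -> ~~ VT (u j) by move=> hj; exact: intS (inv j hj).
  have [a [k [hab hu]]] : exists a k, (a + k.+1 <= n)%N /\ u (a + k.+1)%N = u a.
    have : ~~ uniq (map u (iota 0 n.+1)).
      apply/negP => Hu.
      have : (n.+1 <= #|[pred v | ~~ VT v]|)%N.
        apply/card_geqP; exists (map u (iota 0 n.+1)); split => //.
          by rewrite size_map size_iota.
        move=> x /mapP [j]; rewrite mem_iota /= add0n ltnS => hj ->.
        by rewrite inE uint.
      by rewrite -/n ltnn.
    case/(uniqPn v0) => i [j [hij hj]].
    rewrite size_map size_iota in hj.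
    rewrite !(nth_map 0%N) ?size_iota ?(ltn_trans hij) // !nth_iota ?(ltn_trans hij) // !add0n.
    move=> Heq; exists i, (j - i.+1)%N; rewrite addnS -addSn subnKC //.
  pose B j := X (n - j)%N.+1 (u j).
  have Bstep j : (j < n)%N -> B j <= ((w (f j))%:~R)%:E + B j.+1.
    by move=> hj; have [_ _ _] := fP j hj; rewrite /B (subnSK hj).
  have Bsum : forall K a', (a' + K <= n)%N ->
      B a' <= ((\sum_(j <- iota a' K) w (f j))%R%:~R)%:E + B (a' + K)%N.
    elim=> [|K IH] a' hk; first by rewrite big_nil addn0 add0e.
    rewrite /= big_cons intrD EFinD -addeA -addSnnS.
    apply: le_trans (Bstep a' _) _; first by apply: leq_trans hk; rewrite addnS ltnS leq_addr.
    by apply: leeD2l; apply: IH; rewrite addSnnS.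
  pose p := map f (iota a k.+1).
  have Hp : p = f a :: map f (iota a.+1 k) by [].
  have hjn j : j \in iota a k.+1 -> (j < n)%N.
    by rewrite mem_iota => /andP [_ h]; exact: leq_trans h hab.
  have HE : all (fun e => e \in E) p.
    by apply/allP => e /mapP [j /hjn hj ->]; have [] := fP j hj.
  have HI : all (fun e => ~~ VT (src e) && ~~ VT (tgt e)) p.
    apply/allP => e /mapP [j /hjn hj ->]; have [_ -> -> _] := fP j hj.
    by rewrite !uint // ltnW.
  have hcyc : inner_cycle VT E p.
    rewrite Hp in HE HI *; rewrite /inner_cycle; split => //.
      rewrite path_map; apply: path_iota_gen => i /andP [h1 h2].
      have hi : (i.+1 < n)%N by apply: leq_trans hab; rewrite addnS ltnS.
      rewrite /=.
      have [_ _ -> _] := fP i (ltnW hi).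
      by have [_ -> _ _] := fP i.+1 hi.
    rewrite /= last_map last_iota_gen.
    have h1 : (a + k < n)%N by apply: leq_trans hab; rewrite addnS.
    have h2 : (a < n)%N by apply: leq_trans hab; rewrite addnS ltnS leq_addr.
    have [_ _ -> _] := fP (a + k)%N h1.
    by have [_ -> _ _] := fP a h2; rewrite -addnS.
  have hw := Hneg p hcyc.
  rewrite /cycle_weight /p big_map in hw.
  have Hs := Bsum k.+1 a hab.
  set S := (\sum_(j <- iota a k.+1) w (f j))%R in hw Hs.
  have Hba : B (a + k.+1)%N <= B a.
    by rewrite /B hu; apply: Xmono; rewrite ltnS leq_sub2l // leq_addr.
  have Hlo : -oo < B (a + k.+1)%N by apply: le_lt_trans (leNye _) (inv _ hab).
  have Hhi : B (a + k.+1)%N < +oo := Xfin _ _.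
  have hw' : (S%:~R < 0 :> RR)%R by rewrite ltrz0.
  move: Hlo Hhi (le_trans Hba Hs); case: (B (a + k.+1)%N) => [r| |] //= _ _.
  by rewrite -(EFinD (S%:~R)%R r) lee_fin ?lerDl ?lerDr ?addrC ?lerDl ?lerDr leNgt hw'.
have Hfix : X n.+1 = X n.
  by apply: funext => v; apply/le_anti; rewrite main Xinc.
move=> k; elim: k => [|k IH] v; first by rewrite addn0.
change (X (n + k.+1)%N v = X n v).
rewrite addnS XS (_ : X (n + k)%N = X n) -?XS ?Hfix //.
by apply: funext => u; exact: IH.
Qed.
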